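(* Let $\mathfrak a$ be an abelian ideal of $\mathfrak b$ and suppose $\gamma_1,\gamma_2\in\Delta_{\mathfrak a}$ are strongly orthogonal. (i) If $\gamma_1+\delta\in\Delta^+$ for some $\delta\in\Delta^+$, then $\gamma_2+\delta\notin\Delta^+$. (ii) If $\gamma_1-\delta\in\Delta_{\mathfrak a}$ for some $\delta\in\Delta^+$, then $\gamma_2-\delta\notin\Delta_{\mathfrak a}$.
   Context: Let $G$ be a connected simple algebraic group over an algebraically closed field of characteristic zero, $B$ a Borel subgroup, $T\subset B$ a maximal torus, $\mathfrak b=\mathrm{Lie}(B)$, $\Delta$ the root system of $(G,T)$, $\Delta^+$ the positive roots determined by $B$. An abelian ideal of $\mathfrak b$ is a subspace $\mathfrak a\subset\mathfrak b$ with $[\mathfrak b,\mathfrak a]\subset\mathfrak a$, $[\mathfrak a,\mathfrak a]=0$; it is the sum of the root spaces for the roots in a subset $\Delta_{\mathfrak a}\subset\Delta^+$. Two distinct roots $\gamma_1,\gamma_2$ are strongly orthogonal if neither $\gamma_1+\gamma_2$ nor $\gamma_1-\gamma_2$ is a root. *)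

(* Defs.v *)
From HB Require Import structures.
From mathcomp Require Import all_boot all_order all_algebra.
Set Implicit Arguments. Unset Strict Implicit. Unset Printing Implicit Defensive.
Import Order.TTheory GRing.Theory Num.Theory.
Local Open Scope ring_scope.

Definition dotv (R : realFieldType) (n : nat) (u v : 'rV[R]_n) : R :=
  (u *m v^T) 0 0.

Definition cartan (R : realFieldType) (n : nat) (b a : 'rV[R]_n) : R :=
  2 * dotv b a / dotv a a.

Definition refl (R : realFieldType) (n : nat) (a b : 'rV[R]_n) : 'rV[R]_n :=
  b - cartan b a *: a.

Record root_system (R : realFieldType) (n : nat) (Phi : seq 'rV[R]_n) : Prop := {
  rs_uniq : uniq Phi;
  rs_nonzero : 0 \notin Phi;
  rs_refl : forall a b, a \in Phi -> b \in Phi -> refl a b \in Phi;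
  rs_cryst : forall a b, a \in Phi -> b \in Phi ->
      exists z : int, cartan b a = z%:~R;
  rs_reduced : forall a (c : R), a \in Phi -> c *: a \in Phi -> c = 1 \/ c = -1
}.

Definition irreducible_rs (R : realFieldType) (n : nat) (Phi : seq 'rV[R]_n) : Prop :=
  Phi != [::] /\
  forall P : pred 'rV[R]_n,
    (forall a b, a \in Phi -> b \in Phi -> P a -> ~~ P b -> dotv a b = 0) ->
    (forall a, a \in Phi -> P a) \/ (forall a, a \in Phi -> ~~ P a).

(* Regular vector: orthogonal to no root; it determines the positive system
   Delta^+ = { a in Phi | (a, v) > 0 } (every positive system is of this form). *)
Definition regular (R : realFieldType) (n : nat) (Phi : seq 'rV[R]_n) (v : 'rV[R]_n) :=
  forall a, a \in Phi -> dotv a v != 0.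

Definition posroot (R : realFieldType) (n : nat) (Phi : seq 'rV[R]_n) (v : 'rV[R]_n)
  (a : 'rV[R]_n) : bool := (a \in Phi) && (0 < dotv a v).

(* Delta_a of an abelian ideal a of b = sum of root spaces g_a, a in A:
   [b,a] in a  <->  A upper closed in Delta^+;  [a,a] = 0  <->  A sum-free. *)
Definition abelian_ideal (R : realFieldType) (n : nat) (Phi : seq 'rV[R]_n)
  (v : 'rV[R]_n) (A : pred 'rV[R]_n) : Prop :=
  [/\ forall a, A a -> posroot Phi v a,
      forall a b, A a -> posroot Phi v b -> a + b \in Phi -> A (a + b)
    & forall a b, A a -> A b -> a + b \notin Phi].

Definition strongly_orthogonal (R : realFieldType) (n : nat) (Phi : seq 'rV[R]_n)
  (g1 g2 : 'rV[R]_n) : Prop :=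
  [/\ g1 != g2, g1 + g2 \notin Phi & g1 - g2 \notin Phi].

(* Main.v *)
Require Import Defs.
From mathcomp Require Import all_boot all_order all_algebra.
From mathcomp Require Import ring lra zify.
Import Order.TTheory GRing.Theory Num.Theory.
Local Open Scope ring_scope.

Section Dot.
Variables (R : realFieldType) (n : nat).
Implicit Types (u v w : 'rV[R]_n).

Lemma dotvE u v : dotv u v = \sum_j u 0 j * v 0 j.
Proof. by rewrite /dotv mxE; apply: eq_bigr => j _; rewrite mxE. Qed.

Lemma dotvC u v : dotv u v = dotv v u.
Proof. by rewrite !dotvE; apply: eq_bigr => j _; rewrite mulrC. Qed.

Lemma dotvDl u w v : dotv (u + w) v = dotv u v + dotv w v.
Proof. by rewrite !dotvE -big_split; apply: eq_bigr => j _; rewrite mxE mulrDl. Qed.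

Lemma dotvZl c u v : dotv (c *: u) v = c * dotv u v.
Proof. by rewrite !dotvE mulr_sumr; apply: eq_bigr => j _; rewrite mxE mulrA. Qed.

Lemma dotvNl u v : dotv (- u) v = - dotv u v.
Proof. by rewrite -scaleN1r dotvZl mulN1r. Qed.

Lemma dotvBl u w v : dotv (u - w) v = dotv u v - dotv w v.
Proof. by rewrite dotvDl dotvNl. Qed.

Lemma dotvDr u w v : dotv v (u + w) = dotv v u + dotv v w.
Proof. by rewrite dotvC dotvDl !(dotvC v). Qed.

Lemma dotvZr c u v : dotv v (c *: u) = c * dotv v u.
Proof. by rewrite dotvC dotvZl dotvC. Qed.

Lemma dotvNr u v : dotv v (- u) = - dotv v u.
Proof. by rewrite dotvC dotvNl dotvC. Qed.

Lemma dotvBr u w v : dotv v (u - w) = dotv v u - dotv v w.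
Proof. by rewrite dotvDr dotvNr. Qed.

Lemma dotv_ge0 u : 0 <= dotv u u.
Proof. rewrite dotvE; apply: sumr_ge0 => j _; nra. Qed.

Lemma dotv_eq0 u : dotv u u = 0 -> u = 0.
Proof.
rewrite dotvE => H; apply/rowP => j; rewrite mxE.
have hj : u 0 j * u 0 j = 0.
  by apply: (psumr_eq0P (P := predT) _ H) => // i _; nra.
by move/eqP: hj; rewrite mulf_eq0 orbb => /eqP.
Qed.

Lemma dotv_gt0 u : u != 0 -> 0 < dotv u u.
Proof.
move=> nz; rewrite lt_neqAle dotv_ge0 andbT eq_sym; apply/eqP => /dotv_eq0.
by move/eqP: nz.
Qed.
End Dot.
Arguments dotvE {R n}.
Arguments dotvC {R n}.
Arguments dotvDl {R n}.
Arguments dotvZl {R n}.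
Arguments dotvNl {R n}.
Arguments dotvBl {R n}.
Arguments dotvDr {R n}.
Arguments dotvZr {R n}.
Arguments dotvNr {R n}.
Arguments dotvBr {R n}.
Arguments dotv_ge0 {R n}.
Arguments dotv_eq0 {R n}.
Arguments dotv_gt0 {R n}.

Section Roots.
Variables (R : realFieldType) (n : nat) (Phi : seq 'rV[R]_n).
Hypothesis hP : root_system Phi.

Lemma root_nz a : a \in Phi -> a != 0.
Proof. by move=> aP; apply/eqP => a0; move: (rs_nonzero hP); rewrite -a0 aP. Qed.

Lemma root_dpos a : a \in Phi -> 0 < dotv a a.
Proof. by move=> aP; apply: dotv_gt0; apply: (root_nz _ aP). Qed.

Lemma root_opp a : a \in Phi -> - a \in Phi.
Proof.
move=> aP; have := rs_refl hP aP aP; rewrite /refl /cartan.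
have h := root_dpos _ aP.
have -> : 2 * dotv a a / dotv a a = 2 by field; lra.
by rewrite scaler_nat mulr2n opprD addrA subrr add0r.
Qed.

Lemma sum_root a b : a \in Phi -> b \in Phi -> dotv a b < 0 -> a + b != 0 ->
  a + b \in Phi.
Proof.
move=> aP bP neg nz.
have hA := root_dpos _ aP; have hB := root_dpos _ bP.
set p := dotv a b in neg.
have [z1 ez1] := rs_cryst hP bP aP.
have [z2 ez2] := rs_cryst hP aP bP.
have E1 : cartan a b = 2 * p / dotv b b by [].
have E2 : cartan b a = 2 * p / dotv a a by rewrite /cartan dotvC.
have z1n : z1 < 0.
  rewrite -(ltrz0 R) -ez1 E1 pmulr_llt0 ?invr_gt0 //; lra.
have z2n : z2 < 0.
  rewrite -(ltrz0 R) -ez2 E2 pmulr_llt0 ?invr_gt0 //; lra.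
have [e1|ne1] := eqVneq z1 (-1).
  have := rs_refl hP bP aP; rewrite /refl ez1 e1.
  by rewrite scaleNr opprK scale1r.
have [e2|ne2] := eqVneq z2 (-1).
  have := rs_refl hP aP bP; rewrite /refl ez2 e2.
  by rewrite scaleNr opprK scale1r addrC.
have z1l : z1 <= -2 by lia.
have z2l : z2 <= -2 by lia.
have r1 : cartan a b <= -2.
  by rewrite ez1 (_ : -2 = (-2)%:~R) // ler_int.
have r2 : cartan b a <= -2.
  by rewrite ez2 (_ : -2 = (-2)%:~R) // ler_int.
have p1 : p <= - dotv b b.
  move: r1; rewrite E1 ler_pdivrMr //; lra.
have p2 : p <= - dotv a a.
  move: r2; rewrite E2 ler_pdivrMr //; lra.
set u := dotv b b *: a - p *: b.
have du : dotv u u = dotv b b * (dotv a a * dotv b b - p * p).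
  rewrite /u !(dotvBl, dotvBr, dotvZl, dotvZr) (dotvC b a) -/p; ring.
have u0 : u = 0.
  apply: dotv_eq0; apply/eqP; rewrite eq_le dotv_ge0 andbT du.
  rewrite pmulr_rle0 //; nra.
have ea : a = (p / dotv b b) *: b.
  have h : dotv b b *: a = p *: b by apply/eqP; rewrite -subr_eq0; apply/eqP.
  have Bn : dotv b b != 0 by rewrite gt_eqF.
  by rewrite -[LHS](scalerK Bn) h scalerA mulrC.
have := @rs_reduced _ _ _ hP b (p / dotv b b) bP; rewrite -ea => /(_ aP) [c1|c1].
  move: neg; rewrite /p ea dotvZl c1 mul1r; lra.
by move: nz; rewrite ea c1 scaleN1r addNr eqxx.
Qed.

Lemma diff_root a b : a \in Phi -> b \in Phi -> 0 < dotv a b -> a != b ->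
  a - b \in Phi.
Proof.
move=> aP bP pos neq; apply: sum_root => //; first exact: root_opp.
  by rewrite dotvNr; lra.
by rewrite subr_eq0.
Qed.
End Roots.
Arguments root_nz {R n Phi} hP {a}.
Arguments root_dpos {R n Phi} hP {a}.
Arguments root_opp {R n Phi} hP {a}.
Arguments sum_root {R n Phi} hP {a b}.
Arguments diff_root {R n Phi} hP {a b}.

Theorem lemma1p3 (R : realFieldType) (n : nat) (Phi : seq 'rV[R]_n)
  (v : 'rV[R]_n) (A : pred 'rV[R]_n) (g1 g2 : 'rV[R]_n) :
  root_system Phi -> irreducible_rs Phi -> regular Phi v ->
  abelian_ideal Phi v A -> A g1 -> A g2 -> strongly_orthogonal Phi g1 g2 ->
  (forall d, posroot Phi v d -> posroot Phi v (g1 + d) -> ~~ posroot Phi v (g2 + d)) /\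
  (forall d, posroot Phi v d -> A (g1 - d) -> ~~ A (g2 - d)).
Proof.
move=> hP _ _ [Apos Aup Afree] A1 A2 [n12 s12 d12].
have posP : forall a, posroot Phi v a -> (a \in Phi) /\ 0 < dotv a v.
  by move=> a /andP[].
have Age0 : forall a b, A a -> A b -> 0 <= dotv a b.
  move=> a b Aa Ab; rewrite leNgt; apply/negP => neg.
  have [aP av] := posP a (Apos a Aa); have [bP bv] := posP b (Apos b Ab).
  have nz : a + b != 0.
    apply/eqP => e; have := congr1 (fun x => dotv x v) e.
    rewrite /= dotvDl (_ : dotv 0 v = 0); first lra.
    by rewrite /dotv mul0mx mxE.
  by move: (Afree a b Aa Ab); rewrite (sum_root hP aP bP neg nz).
have [g1P _] := posP g1 (Apos g1 A1); have [g2P _] := posP g2 (Apos g2 A2).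
have o12 : dotv g1 g2 = 0.
  have := Age0 g1 g2 A1 A2; rewrite le_eqVlt => /orP[/eqP <- //|pos].
  by move: d12; rewrite (diff_root hP g1P g2P pos n12).
have nab : forall d, g1 + d != g2 + d by move=> d; rewrite (inj_eq (addIr d)).
have nab' : forall d, g1 - d != g2 - d by move=> d; rewrite (inj_eq (addIr _)).
split.
- move=> d dP /andP[a1P a1v]; apply/negP => /andP[a2P a2v].
  have Aa1 : A (g1 + d) by apply: Aup.
  have Aa2 : A (g2 + d) by apply: Aup.
  have h1 := Age0 _ _ Aa1 A2; have h2 := Age0 _ _ Aa2 A1.
  have dpos := root_dpos hP (proj1 (posP d dP)).
  have pos : 0 < dotv (g1 + d) (g2 + d).
    move: h1 h2; rewrite !(dotvDl, dotvDr) (dotvC g2 g1) (dotvC d g1) o12; lra.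
  have := diff_root hP a1P a2P pos (nab d).
  by rewrite opprD addrACA subrr addr0 (negbTE d12).
- move=> d dP Ab1; apply/negP => Ab2.
  have [a1P _] := posP _ (Apos _ Ab1); have [a2P _] := posP _ (Apos _ Ab2).
  have h1 := Age0 _ _ Ab1 A2; have h2 := Age0 _ _ Ab2 A1.
  have dpos := root_dpos hP (proj1 (posP d dP)).
  have pos : 0 < dotv (g1 - d) (g2 - d).
    move: h1 h2; rewrite !(dotvBl, dotvBr) (dotvC g2 g1) (dotvC d g1) o12; lra.
  have := diff_root hP a1P a2P pos (nab' d).
  by rewrite opprB addrA subrK (negbTE d12).
Qed.
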